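(* Let $\Sigma\subset Z$ be a centred curve of bidegree $(k,k)$. If a point $(w,z)\in\Sigma$ is fixed by a nontrivial rotation of $H^3$ preserving $(0,0,1)$, then $w=z$.
   Context: $H^3$ is the upper half-space model; $\hat w=-1/\bar w$; $Z=\mathbb{P}^1\times\mathbb{P}^1\setminus\{\hat w=z\}$ is the space of oriented geodesics, $(w,z)$ the geodesic from $\hat w$ to $z$; isometries act on $Z$ through their action on endpoints. A curve given by $(-w)^k\langle q(\hat w),q(z)\rangle=0$ with $q(z)=\sum_j\sqrt{\binom kj}z^jv_j$, $v_j\in\mathbb{C}^{k+1}$, is centred if $\sum_j(2j-k)\|v_j\|^2=0$ and $\sum_j\sqrt{(j+1)(k-j)}\langle v_j,v_{j+1}\rangle=0$. *)

(* Defs.v *)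
From HB Require Import structures.
From mathcomp Require Import all_boot all_order all_algebra.
From mathcomp Require Import complex.
From mathcomp Require Import Rstruct.


Set Implicit Arguments.
Unset Strict Implicit.
Unset Printing Implicit Defensive.

Import Order.TTheory GRing.Theory Num.Theory.
Local Open Scope ring_scope.
Local Open Scope complex_scope.

Notation C := (Rdefinitions.R)[i].

(* Some x is the finite point x, None is ∞. *)
Definition P1 := option C.

(* homogeneous coordinates [z1 : z0] of a point (z = z1/z0) *)
Definition hc1 (p : P1) : C := if p is Some x then x else 1.
Definition hc0 (p : P1) : C := if p is Some _ then 1 else 0.

(* the antipodal map  w ↦ ŵ = -1/conj(w)  (0 ↦ ∞, ∞ ↦ 0) *)
Definition hat (p : P1) : P1 :=
  match p with
  | None => Some 0
  | Some x => if x == 0 then None else Some (- (x^*)^-1)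
  end.

(* Z = P^1 × P^1 minus {ŵ = z};  (w,z) = oriented geodesic from ŵ to z *)
Definition inZ (w z : P1) : Prop := hat w <> z.

(* H^3 = upper half space {(x, t) : x ∈ C, t ∈ R, t > 0}; an orientation-
   preserving isometry is (the Poincaré extension of) a matrix
   [[a, b], [c, d]] in SL(2, C).                                          *)
Record SL2C := mkSL2C { ga : C; gb : C; gc : C; gd : C;
                        gdet : ga * gd - gb * gc = 1 }.

Definition sqn (u : C) : Rdefinitions.R := complex.Re (u * u^*).

(* Poincaré extension: action on a point (x, t) of H^3 *)
Definition actH3 (g : SL2C) (p : C * Rdefinitions.R) : C * Rdefinitions.R :=
  let: (x, t) := p in
  let: D := sqn (gc g * x + gd g) + sqn (gc g) * t ^+ 2 in
  (((ga g * x + gb g) * (gc g * x + gd g)^* + ga g * (gc g)^* * (t ^+ 2)%:C)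
      / D%:C,
   t / D).

Definition actP1 (g : SL2C) (p : P1) : P1 :=
  match p with
  | Some x => if gc g * x + gd g == 0 then None
              else Some ((ga g * x + gb g) / (gc g * x + gd g))
  | None => if gc g == 0 then None else Some (ga g / gc g)
  end.

Definition centre : C * Rdefinitions.R := (0, 1).

Definition fixes_centre (g : SL2C) : Prop := actH3 g centre = centre.

Definition nontrivial (g : SL2C) : Prop :=
  exists x (t : Rdefinitions.R), 0 < t /\ actH3 g (x, t) <> (x, t).

(* action on Z through the endpoints: the geodesic from ŵ to z is sent
   to the geodesic from g ŵ to g z, i.e. to the point (hat (g ŵ), g z)
   (hat is an involution). *)
Definition actZ (g : SL2C) (wz : P1 * P1) : P1 * P1 :=
  (hat (actP1 g (hat wz.1)), actP1 g wz.2).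

Definition hdot (n : nat) (a b : 'rV[C]_n) : C :=
  \sum_(i < n) (a 0 i)^* * b 0 i.

Definition sqbin (k j : nat) : C := (Num.sqrt ('C(k, j)%:R : Rdefinitions.R))%:C.

Definition qpoly (k : nat) (v : nat -> 'rV[C]_k.+1) (z : C) : 'rV[C]_k.+1 :=
  \sum_(j < k.+1) (sqbin k j * z ^+ j) *: v j.

(* Expanding, for finite w, z:
     (-w)^k <q(ŵ), q(z)>
       = \sum_{j,l} sqrt(C(k,j)) sqrt(C(k,l)) (-1)^(k+j) w^(k-j) z^l <v_j,v_l>,
   a polynomial of bidegree (k,k).  Its bihomogenisation in the
   coordinates w = [w1:w0], z = [z1:z0] defines the curve in P^1 x P^1: *)
Definition curveF (k : nat) (v : nat -> 'rV[C]_k.+1) (w z : P1) : C :=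
  \sum_(j < k.+1) \sum_(l < k.+1)
     sqbin k j * sqbin k l * (-1) ^+ (k + j)
     * hc1 w ^+ (k - j) * hc0 w ^+ j * hc1 z ^+ l * hc0 z ^+ (k - l)
     * hdot (v j) (v l).

Definition onSigma (k : nat) (v : nat -> 'rV[C]_k.+1) (w z : P1) : Prop :=
  inZ w z /\ curveF v w z = 0.

Definition is_curve (k : nat) (v : nat -> 'rV[C]_k.+1) : Prop :=
  exists w z, curveF v w z <> 0.

Definition centred (k : nat) (v : nat -> 'rV[C]_k.+1) : Prop :=
  \sum_(j < k.+1) ((2 * j)%:R - k%:R) * hdot (v j) (v j) = 0
  /\ \sum_(j < k) (Num.sqrt ((j.+1 * (k - j))%N%:R : Rdefinitions.R))%:C
        * hdot (v j) (v j.+1) = 0.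

(* Main.v *)
Require Import Defs.
From HB Require Import structures.
From mathcomp Require Import all_boot all_order all_algebra.
From mathcomp Require Import complex Rstruct.
From mathcomp Require Import ring.
Set Implicit Arguments. Unset Strict Implicit.
Import Order.TTheory GRing.Theory Num.Theory.
Local Open Scope ring_scope.

Lemma sqnE (u : C) : u * u^* = (sqn u)%:C%C.
Proof.
case: u => a b; rewrite /sqn -[Num.conj _]/(conjc _) /=; apply/eqP; rewrite eq_complex /=.
apply/andP; split; apply/eqP; ring.
Qed.

Lemma aux (x : C) : x != 0 -> - (- x^*^-1)^*^-1 = x.
Proof. by move=> _; rewrite rmorphN fmorphV /= conjCK invrN invrK opprK. Qed.

Lemma hatK (p : P1) : hat (hat p) = p.
Proof.
case: p => [x|] /=; last by rewrite eqxx.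
case: eqP => [->|/eqP x0] //=.
rewrite oppr_eq0 invr_eq0 conjc_eq0 (negbTE x0).
by rewrite (aux x0).
Qed.

Lemma su2 (g : SL2C) : fixes_centre g ->
  ga g = (gd g)^* /\ gb g = - (gc g)^* /\ gc g * (gc g)^* + gd g * (gd g)^* = 1.
Proof.
case: g => a b c d det; rewrite /fixes_centre /actH3 /centre /=.
case=> H1 H2.
rewrite !mulr0 !add0r expr1n mulr1 in H1 H2.
have D1 : sqn d + sqn c = 1.
  by move: H2; rewrite mul1r => /(congr1 GRing.inv); rewrite invrK invr1.
rewrite D1 rmorph1 divr1 mulr1 in H1.
have S : c * c^* + d * d^* = 1.
  by rewrite !sqnE -rmorphD addrC D1 rmorph1.
have E1 : a - d^* = - a * (c * c^* + d * d^* - 1) + c * (b * d^* + a * c^*)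
   + d^* * (a * d - b * c - 1) by ring.
have E2 : b + c^* = - b * (c * c^* + d * d^* - 1) + d * (b * d^* + a * c^*)
   - c^* * (a * d - b * c - 1) by ring.
rewrite S H1 det subrr !mulr0 oppr0 !addr0 in E1 E2.
split; first by apply/eqP; rewrite -subr_eq0 E1.
split; last by [].
by apply/eqP; rewrite -subr_eq0 opprK E2.
Qed.

Lemma sqn1 (u : C) : u * u^* = 1 -> sqn u = 1.
Proof. by rewrite sqnE -(rmorph1 (real_complex _)) => /complexI. Qed.

Lemma nontriv (g : SL2C) : fixes_centre g -> nontrivial g ->
  ~ (gc g = 0 /\ gd g = (gd g)^*).
Proof.
move=> /su2 [Ea [Eb S]] [x [t [_ Hne]]] [c0 dr]; apply: Hne.
move: Ea Eb S dr; case: g c0 => a b c d det /= -> -> ->.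
rewrite rmorph0 oppr0 mul0r add0r => dr S.
rewrite /actH3 /= !mul0r add0r addr0.
have s1 : sqn d = 1 by apply: sqn1.
have s0 : sqn 0 = 0 by rewrite /sqn mul0r.
rewrite s1 s0 mul0r addr0 rmorph1 divr1 mulr0 mul0r addr0 divr1.
by rewrite mulrC mulrA -{1}S dr mul1r.
Qed.

Lemma fixSome (g : SL2C) x : fixes_centre g -> actP1 g (Some x) = Some x ->
  gc g * x ^+ 2 + (gd g - (gd g)^*) * x + (gc g)^* = 0.
Proof.
move=> /su2 [Ea [Eb _]] /=; case: eqP => // /eqP nz [E].
have : gc g * x ^+ 2 + (gd g - (gd g)^*) * x + (gc g)^*
   = x * (gc g * x + gd g) - (ga g * x + gb g) by rewrite Ea Eb; ring.
by move=> ->; rewrite -{1}E divfK // subrr.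
Qed.

Lemma fixNone (g : SL2C) : actP1 g None = None -> gc g = 0.
Proof. by rewrite /=; case: eqP. Qed.

Lemma notm1 (x : C) : x^* * x <> -1.
Proof.
move=> E; have := mul_conjC_ge0 x; rewrite mulrC E.
by rewrite ler0N1.
Qed.

Lemma key (g : SL2C) (u z : P1) : fixes_centre g -> nontrivial g ->
  actP1 g u = u -> actP1 g z = z -> u <> z -> hat u = z.
Proof.
move=> fc nt fu fz uz.
have nt' := nontriv fc nt.
have [c0|c0] := eqVneq (gc g) 0.
  have ed : gd g - (gd g)^* != 0.
    by rewrite subr_eq0; apply/eqP => E; apply: nt'.
  have only0 : forall x, actP1 g (Some x) = Some x -> x = 0.
    move=> x /(fixSome fc); rewrite c0 rmorph0 mul0r add0r addr0 => /eqP.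
    by rewrite mulf_eq0 (negbTE ed) /= => /eqP.
  move: fu fz uz; case: u => [x|] fu; case: z => [y|] fz uz /=.
  - by rewrite (only0 _ fu) (only0 _ fz) in uz.
  - by rewrite (only0 _ fu) eqxx.
  - by rewrite (only0 _ fz).
  - by [].
move: fu fz uz; case: u => [x|] fu; last by move/fixNone: fu => E; rewrite E eqxx in c0.
case: z => [y|] fz; last by move/fixNone: fz => E; rewrite E eqxx in c0.
move=> uz; have xy : x - y != 0 by rewrite subr_eq0; apply/eqP => E; apply: uz; rewrite E.
have Qx := fixSome fc fu; have Qy := fixSome fc fz.
set c := gc g in c0 Qx Qy *; set e := gd g - (gd g)^* in Qx Qy.
have x0 : x != 0.
  apply/eqP => E; move: Qx; rewrite E expr0n /= !mulr0 !add0r => /eqP.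
  by rewrite conjC_eq0 (negbTE c0).
rewrite /= (negbTE x0); congr Some.
set s := x^*; set Y := - s^-1.
have s0 : s != 0 by rewrite conjC_eq0.
have sY : s * Y = -1 by rewrite /Y mulrN divff.
have ee : e^* = - e by rewrite /e rmorphB /= conjCK opprB.
have cQ : c^* * s ^+ 2 - e * s + c = 0.
  have := congr1 Num.conj Qx; rewrite rmorph0 => <-.
  by rewrite !rmorphD !rmorphM /= ee conjCK -/s; ring.
have QY : c * Y ^+ 2 + e * Y + c^* = 0.
  have E : (c * Y ^+ 2 + e * Y + c^*) * s ^+ 2 - (c^* * s ^+ 2 - e * s + c)
     = c * ((s * Y) ^+ 2 - 1) + e * s * (s * Y + 1) by ring.
  rewrite sY cQ subr0 in E.
  have : (c * Y ^+ 2 + e * Y + c^*) * s ^+ 2 = 0 by rewrite E; ring.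
  by move/eqP; rewrite mulf_eq0 expf_eq0 (negbTE s0) andbF orbF => /eqP.
have Sxy : c * (x + y) + e = 0.
  have : (x - y) * (c * (x + y) + e) = 0.
    by rewrite -[RHS](subrr 0) -{1}Qx -Qy; ring.
  by move/eqP; rewrite mulf_eq0 (negbTE xy) /= => /eqP.
apply/eqP; rewrite -subr_eq0; apply/negPn/negP => Yy.
have : (Y - y) * (c * (Y + y) + e) = 0.
  by rewrite -[RHS](subrr 0) -{1}QY -Qy; ring.
move/eqP; rewrite mulf_eq0 (negbTE Yy) /= => /eqP SY.
have : c * (Y - x) = 0 by rewrite -[RHS](subrr 0) -{1}SY -Sxy; ring.
move/eqP; rewrite mulf_eq0 (negbTE c0) /= subr_eq0 => /eqP YX.
by have := @notm1 x; rewrite -/s -YX sY.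
Qed.

Theorem mainTheorem6 (k : nat) (v : nat -> 'rV[C]_k.+1) :
  is_curve v -> centred v ->
  forall (g : SL2C), fixes_centre g -> nontrivial g ->
  forall w z : P1, onSigma v w z -> actZ g (w, z) = (w, z) -> w = z.
Proof.
move=> _ _ g fc nt w z [inz _] [E1 E2].
have fu : actP1 g (hat w) = hat w by rewrite -{2}E1 hatK.
by rewrite -(hatK w); exact: (key fc nt fu E2 inz).
Qed.
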